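(* Let $Y$ be an integrable random sup-measure on $E$. Then almost surely $Y$ is a scaled indicator sup-measure, i.e. $Y(\cdot)=c\,\mathbf 1_{F\cap\,\cdot\,\neq\emptyset}$ for some (random) $c\ge0$ and closed $F\subset E$, if and only if $$\mathbb E\int^e f\,dY=\mathbb E\int f\,dY\qquad\text{for all } f\in\mathrm{USC}.$$
   Context: $E$ is a locally compact Hausdorff second countable space; $\mathcal K$ its compact subsets. A sup-measure on $E$ is a Choquet capacity $\varphi$ (non-decreasing, $\varphi(\emptyset)=0$, $\varphi(A_n)\uparrow\varphi(A)$ if $A_n\uparrow A$, $\varphi(K_n)\downarrow\varphi(K)$ for compact $K_n\downarrow K$), finite on compacts, with $\varphi(\bigcup_j G_j)=\sup_j\varphi(G_j)$ for all families of open sets; a random sup-measure is a random element of the space of sup-measures (Borel $\sigma$-algebra of the sup-vague topology); $Y$ is integrable if $\mathbb E\,Y(K)<\infty$ for all $K\in\mathcal K$. $\mathrm{USC}$: bounded non-negative upper semicontinuous functions on $E$ with relatively compact support. For $f\in\mathrm{USC}$: extremal integral $\int^e f\,d\varphi=\sup\{\varphi(K)\inf_{x\in K}f(x):K\in\mathcal K\}$; Choquet integral $\int f\,d\varphi=\int_0^\infty\varphi(\{f\ge t\})\,dt$. *)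

(* Defs.v *)
From HB Require Import structures.
From mathcomp Require Import all_boot all_order all_algebra.
From mathcomp Require Import all_classical all_reals all_analysis.
Set Implicit Arguments. Unset Strict Implicit. Unset Printing Implicit Defensive.
Import Order.TTheory GRing.Theory Num.Theory.
Local Open Scope classical_set_scope.
Local Open Scope ring_scope.

Section SupMeasures.
Context {R : realType} {E : topologicalType}.
Local Open Scope ereal_scope.

Definition sup_measure (phi : set E -> \bar R) : Prop :=
  [/\ phi set0 = 0,
      (forall A B, A `<=` B -> phi A <= phi B) &
      (forall A : set E, 0 <= phi A)] /\
  [/\
      (forall A : nat -> set E, {homo A : n m / (n <= m)%N >-> n `<=` m} ->
          (phi \o A) @ \oo --> phi (\bigcup_n A n)),
      (forall K : nat -> set E, (forall n, compact (K n)) ->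
          {homo K : n m / (n <= m)%N >-> m `<=` n} ->
          (phi \o K) @ \oo --> phi (\bigcap_n K n)),
      (forall K, compact K -> phi K < +oo) &
      (forall G : set (set E), G !=set0 -> (forall g, G g -> open g) ->
          phi (\bigcup_(g in G) g) = ereal_sup (phi @` G))].

Definition SM : set (set E -> \bar R) := [set m | sup_measure m].

Definition sv_subbase : set (set (set E -> \bar R)) :=
  [set B | (exists (K : set E) (x : R), compact K /\ B = [set m | m K < x%:E])
        \/ (exists (G : set E) (x : R), open G /\ B = [set m | x%:E < m G])].

Definition sv_fin_inter : set (set (set E -> \bar R)) :=
  [set B | exists (n : nat) (b : nat -> set (set E -> \bar R)),
     (forall i, (i < n)%N -> sv_subbase (b i)) /\ B = \bigcap_(i in `I_n) b i].

Definition sv_open : set (set (set E -> \bar R)) :=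
  [set U | exists V : set (set (set E -> \bar R)),
     V `<=` sv_fin_inter /\ U = SM `&` \bigcup_(v in V) v].

Definition sv_borel : set (set (set E -> \bar R)) := <<s SM, sv_open >>.

Definition random_sup_measure d (Omega : measurableType d)
    (Y : Omega -> set E -> \bar R) : Prop :=
  (forall w, SM (Y w)) /\
  (forall B, sv_borel B -> measurable (Y @^-1` B)).

Definition integrable_rsm d (Omega : measurableType d) (P : probability Omega R)
    (Y : Omega -> set E -> \bar R) : Prop :=
  forall K, compact K -> \int[P]_w Y w K < +oo.

Definition upper_semicontinuous (f : E -> R) : Prop :=
  forall t : R, open [set x | (f x < t)%R].

Definition USC (f : E -> R) : Prop :=
  [/\ (exists M : R, forall x, (`|f x| <= M)%R),
      (forall x, (0 <= f x)%R),
      upper_semicontinuous f &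
      compact (closure [set x | f x != 0%R])].

Definition ext_int (f : E -> R) (phi : set E -> \bar R) : \bar R :=
  ereal_sup [set phi K * ereal_inf [set (f x)%:E | x in K] | K in [set K | compact K]].

Definition choquet_int (f : E -> R) (phi : set E -> \bar R) : \bar R :=
  \int[@lebesgue_measure R]_(t in `[0%R, +oo[) phi [set x | (t <= f x)%R].

Definition scaled_indicator (phi : set E -> \bar R) : Prop :=
  exists (c : R) (F : set E), [/\ (0 <= c)%R, closed F &
    forall A, phi A = if `[< F `&` A !=set0 >] then c%:E else 0].

End SupMeasures.

(* Main.v *)
Require Import Defs.
From HB Require Import structures.
From mathcomp Require Import all_boot all_order all_algebra.
From mathcomp Require Import all_classical all_reals all_analysis.
From mathcomp Require Import measurable_realfun.
From mathcomp Require Import lra.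
Import Order.TTheory GRing.Theory Num.Theory.
Local Open Scope classical_set_scope.
Local Open Scope ring_scope.
Set Implicit Arguments. Unset Strict Implicit. Unset Printing Implicit Defensive.
Import HBNNSimple.
Section NL.
Local Open Scope ereal_scope.
Context d (T : measurableType d) (R : realType) (mu : {measure set T -> \bar R}).

Lemma nn_le_null (f g : T -> \bar R) (N : set T) :
  measurable N -> mu N = 0 -> (forall x, 0 <= g x) ->
  (forall x, ~ N x -> f x <= g x) ->
  ereal_sup [set sintegral mu h | h in [set h : {nnsfun T >-> R} | forall x, (h x)%:E <= f x]]
  <= ereal_sup [set sintegral mu h | h in [set h : {nnsfun T >-> R} | forall x, (h x)%:E <= g x]].
Proof.
move=> mN N0 g0 fg; apply: ge_ereal_sup => _ [h hf <-].
pose h' := mul_nnsfun h (indic_nnsfun R (measurableC mN)).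
have -> : sintegral mu h = sintegral mu h'.
  have E1 (k : {nnsfun T >-> R}) : sintegral mu k = \int[mu]_x (k x)%:E.
    by rewrite (integral_nnsfun mu measurableT) patch_setT.
  rewrite !E1; apply: ae_eq_integral => //; try by apply/measurable_EFinP; exact: measurable_funPT.
  exists N; split => // x /= /not_implyP [_]; apply: contra_notP => Nx.
  by rewrite /h' /= mindicE mem_set ?mulr1.
apply: ereal_sup_ubound; exists h' => // x /=.
rewrite mindicE; case: (boolP (x \in ~` N)) => [/set_mem xN|_].
  by rewrite mulr1; apply: le_trans (hf x) (fg x xN).
by rewrite mulr0.
Qed.
End NL.

Section NL2.
Local Open Scope ereal_scope.
Context d (T : measurableType d) (R : realType) (mu : {measure set T -> \bar R}).

Lemma int_null (D N : set T) (f g : T -> \bar R) :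
  measurable N -> mu N = 0 ->
  (forall x, D x -> 0 <= f x) -> (forall x, D x -> 0 <= g x) ->
  (forall x, D x -> ~ N x -> f x = g x) ->
  \int[mu]_(x in D) f x = \int[mu]_(x in D) g x.
Proof.
move=> mN N0 f0 g0 fg; rewrite (ge0_integralE mu f0) (ge0_integralE mu g0) /=.
have p0 (h : T -> \bar R) : (forall x, D x -> 0 <= h x) -> forall x, 0 <= (h \_ D) x.
  by move=> h0 x; rewrite patchE; case: ifPn => // /set_mem /h0.
apply/eqP; rewrite eq_le; apply/andP; split; apply: (nn_le_null mN N0); try exact: p0.
  by move=> x Nx; rewrite !patchE; case: ifPn => // /set_mem Dx; rewrite fg.
by move=> x Nx; rewrite !patchE; case: ifPn => // /set_mem Dx; rewrite fg.
Qed.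
End NL2.
Section Det.
Context {R : realType} {E : topologicalType}.
Local Open Scope ereal_scope.
Variable b : nat -> set E.
Hypothesis b_open : forall n, open (b n).
Hypothesis b_cpt : forall n, compact (closure (b n)).
Hypothesis b_base : forall x (U : set E), open U -> U x -> exists n, b n x /\ b n `<=` U.
Hypothesis hE : hausdorff_space E.

Lemma nbhs_openP (x : E) A : nbhs x A -> exists2 U, open U /\ U x & U `<=` A.
Proof. by rewrite nbhsE => -[U [oU Ux] UA]; exists U. Qed.

Fixpoint Iset (l : seq nat) : set E :=
  match l with [::] => setT | i :: l' => closure (b i) `&` Iset l' end.
Definition Iset' l := closure (b (head 0%N l)) `&` Iset l.
Fixpoint Kset (s : seq (seq nat)) : set E :=
  match s with [::] => set0 | l :: s' => Iset' l `|` Kset s' end.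

Lemma IsetP l y : Iset l y <-> forall i, i \in l -> closure (b i) y.
Proof.
elim: l => [|i l IH] /=; first by split.
split=> [[ci /IH H] j|H]; first by rewrite inE => /orP[/eqP->//|/H].
split; first by apply: H; rewrite inE eqxx.
by apply/IH => j jl; apply: H; rewrite inE jl orbT.
Qed.

Lemma Iset_closed l : closed (Iset l).
Proof. elim: l => [|i l IH] /=; [exact: closedT | apply: closedI => //; exact: closed_closure]. Qed.

Lemma Iset'_cpt l : compact (Iset' l).
Proof.
apply: (@subclosed_compact _ _ (closure (b (head 0%N l)))).
- apply: closedI; [exact: closed_closure | exact: Iset_closed].
- exact: b_cpt.
- by move=> y [].
Qed.

Lemma Kset_cpt s : compact (Kset s).
Proof. elim: s => [|l s IH] /=; [exact: compact0 | apply: compactU => //; exact: Iset'_cpt]. Qed.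

Lemma Kset_cat s t : Kset (s ++ t) = Kset s `|` Kset t.
Proof. by elim: s => [|l s IH] /=; [rewrite set0U | rewrite IH setUA]. Qed.

Lemma nbhs_closure_b i x : b i x -> nbhs x (closure (b i)).
Proof.
move=> bix; apply: (filterS (@subset_closure _ (b i))).
exact: open_nbhs_nbhs.
Qed.

Lemma Iset_nbhs l x : (forall i, i \in l -> b i x) -> nbhs x (Iset l).
Proof.
elim: l => [|i l IH] H /=; first exact: filterT.
apply: filterI; first by apply: nbhs_closure_b; apply: H; rewrite inE eqxx.
by apply: IH => j jl; apply: H; rewrite inE jl orbT.
Qed.

Section Point.
Variable x : E.
Variable n0 : nat.
Hypothesis bn0 : b n0 x.

Definition lx m := n0 :: [seq i <- iota 0 m | `[< b i x >]].
Definition Kx m := Kset [:: lx m].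

Lemma Kx_eq m : Kx m = Iset' (lx m).
Proof. by rewrite /Kx /= setU0. Qed.

Lemma lxP m i : i \in lx m -> b i x.
Proof.
rewrite inE => /orP[/eqP->//|]; rewrite mem_filter => /andP[/asboolP//].
Qed.

Lemma Kx_nbhs m : nbhs x (Kx m).
Proof.
rewrite Kx_eq; apply: filterI; first exact: nbhs_closure_b.
by apply: Iset_nbhs => i; apply: lxP.
Qed.

Lemma Kx_dec : {homo Kx : n m / (n <= m)%N >-> m `<=` n}.
Proof.
move=> n m nm y; rewrite !Kx_eq => -[c /IsetP H]; split => //.
apply/IsetP => i; rewrite inE => /orP[/eqP->|]; first by apply: H; rewrite inE eqxx.
rewrite mem_filter mem_iota => /andP[bi /andP[_ im]]; apply: H.
by rewrite inE mem_filter mem_iota bi /= (leq_trans im) ?orbT.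
Qed.

Lemma Kx_cap : \bigcap_m Kx m = [set x].
Proof.
apply/seteqP; split => [y Hy|y ->]; last first.
  move=> m _; rewrite Kx_eq; split; first exact: subset_closure.
  by apply/IsetP => i /lxP bi; apply: subset_closure.
suff : x = y by move=> ->.
apply: hE => A B /nbhs_openP [U [oU Ux] UA] By.
have [n [bnx bnU]] := b_base oU Ux.
have : closure (b n) y.
  have := Hy n.+1 I; rewrite Kx_eq => -[_ /IsetP]; apply.
  by rewrite inE mem_filter mem_iota /= ltnSn andbT; apply/orP; right; apply/asboolP.
rewrite closureEnbhs => /(_ (b n) B (fun z bz => bz) By) [z [bz Bz]].
by exists z; split => //; apply: UA; apply: bnU.
Qed.
End Point.

Lemma b_pt x : exists n, b n x.
Proof. by have [n [bn _]] := b_base (@openT E) (I : setT x); exists n. Qed.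

Variable phi : set E -> \bar R.
Hypothesis hphi : sup_measure phi.
Hypothesis HP : forall s t, phi (Kset s) = 0 \/ phi (Kset s) = phi (Kset (s ++ t)).

Let phi0 : phi set0 = 0. Proof. by case: hphi => -[]. Qed.
Let mono A B : A `<=` B -> phi A <= phi B. Proof. by case: hphi => -[_ + _] _; apply. Qed.
Let ge0 A : 0 <= phi A. Proof. by case: hphi => -[]. Qed.
Let cvgdn : forall K : nat -> set E, (forall n, compact (K n)) ->
          {homo K : n m / (n <= m)%N >-> m `<=` n} ->
          (phi \o K) @ \oo --> phi (\bigcap_n K n).
Proof. by case: hphi => _ [_ + _ _]. Qed.
Let fin K : compact K -> phi K < +oo. Proof. by case: hphi => _ [_ _ + _]; apply. Qed.
Let supadd : forall G : set (set E), G !=set0 -> (forall g, G g -> open g) ->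
          phi (\bigcup_(g in G) g) = ereal_sup (phi @` G).
Proof. by case: hphi => _ [_ _ _ +]. Qed.

Let Gc := [set U : set E | open U /\ exists s, U `<=` Kset s].

Let Gc_cover : \bigcup_(g in Gc) g = setT.
Proof.
apply/seteqP; split => // x _; have [n0 bn0] := b_pt x.
have /nbhs_openP [U [oU Ux] UK] := Kx_nbhs bn0 0.
by exists U => //; split => //; exists [:: lx x n0 0].
Qed.

Let phiT_sup : phi setT = ereal_sup (phi @` Gc).
Proof.
rewrite -{1}Gc_cover supadd //; last by move=> g [].
by exists set0; split; [exact: open0 | exists [::]].
Qed.

Let K_le s t : phi (Kset s) != 0 -> phi (Kset t) <= phi (Kset s).
Proof.
move=> nz; case: (HP t s) => [->//|->]; case: (HP s t) => [e|->].
  by rewrite e eqxx in nz.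
by rewrite !Kset_cat setUC.
Qed.

Lemma K_val s : phi (Kset s) = 0 \/ phi (Kset s) = phi setT.
Proof.
case: (eqVneq (phi (Kset s)) 0) => [|nz]; first by left.
right; apply/eqP; rewrite eq_le mono //= phiT_sup.
apply: ge_ereal_sup => _ [U [_ [t Ut]] <-].
exact: le_trans (mono Ut) (K_le t nz).
Qed.

Lemma phiT_fin : phi setT < +oo.
Proof.
have [[s nz]|all0] := pselect (exists s, phi (Kset s) != 0).
  by case: (K_val s) => [e|<-]; [rewrite e eqxx in nz | apply: fin; exact: Kset_cpt].
rewrite phiT_sup (@le_lt_trans _ _ 0) //; apply: ge_ereal_sup => _ [U [_ [t Ut]] <-].
apply: le_trans (mono Ut) _; apply: contra_notP all0 => H.
by exists t; apply/negP => /eqP e; rewrite e lexx in H.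
Qed.

Lemma pt_case x n0 (bn0 : b n0 x) :
  (exists m, phi (Kx x n0 m) = 0) \/
  ((forall m, phi (Kx x n0 m) = phi setT) /\ phi [set x] = phi setT).
Proof.
have [|N] := pselect (exists m, phi (Kx x n0 m) = 0); first by left.
have Hm m : phi (Kx x n0 m) = phi setT.
  case: (K_val [:: lx x n0 m]) => // e; exfalso; apply: N; by exists m.
right; split => //.
have c1 := cvgdn (fun m => @Kset_cpt [:: lx x n0 m]) (@Kx_dec x n0).
rewrite (Kx_cap bn0) in c1.
have e : phi \o Kx x n0 = cst (phi setT) by apply/funext => m; exact: Hm.
rewrite e in c1.
move: c1 => /cvg_lim <- //; rewrite /cst; exact: lim_cst.
Qed.

Lemma pt0_nbhs x : phi [set x] = 0 -> exists U, [/\ open U, U x & phi U = 0].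
Proof.
move=> px; have [n0 bn0] := b_pt x.
have [[m Hm]|[Hm pT]] := pt_case bn0.
  have /nbhs_openP [U [oU Ux] UK] := Kx_nbhs bn0 m.
  by exists U; split => //; apply/eqP; rewrite eq_le ge0 andbT -Hm mono.
have /nbhs_openP [U [oU Ux] UK] := Kx_nbhs bn0 0.
exists U; split => //; apply/eqP; rewrite eq_le ge0 andbT.
by rewrite -px pT -(Hm 0%N) mono.
Qed.

Lemma pt_val x : phi [set x] = 0 \/ phi [set x] = phi setT.
Proof.
have [n0 bn0] := b_pt x.
have [[m Hm]|[_ ->]] := pt_case bn0; last by right.
left; apply/eqP; rewrite eq_le ge0 andbT -Hm mono // => y ->.
have := Kx_cap bn0; rewrite eqEsubset => -[_ /(_ x erefl)]; exact.
Qed.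

Theorem det_indicator : scaled_indicator phi.
Proof.
set F := [set x | phi [set x] != 0].
set G0 := [set U : set E | open U /\ phi U = 0].
have G0ne : G0 !=set0 by exists set0; split => //; exact: open0.
have phiG0 : phi (\bigcup_(g in G0) g) = 0.
  rewrite supadd //; last by move=> g [].
  apply/eqP; rewrite eq_le; apply/andP; split; last first.
    by apply: ereal_sup_ubound; exists set0 => //; split => //; exact: open0.
  by apply: ge_ereal_sup => _ [U [_ ->] <-].
have CF : ~` F = \bigcup_(g in G0) g.
  apply/seteqP; split => [x /negP/negPn/eqP /pt0_nbhs [U [oU Ux U0]]|x [U [_ U0] Ux]].
    by exists U.
  apply/negP/negPn/eqP; apply/eqP; rewrite eq_le ge0 andbT -U0 mono // => y -> //.
have T0 := ge0 setT.
have Tf : phi setT \is a fin_num by rewrite ge0_fin_numE // phiT_fin.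
exists (fine (phi setT)), F; split.
- by rewrite fine_ge0.
- rewrite -[F]setCK closedC CF; apply: bigcup_open => g []; done.
- move=> A; case: asboolP => [[x [Fx Ax]]|nF].
    rewrite fineK //; apply/eqP; rewrite eq_le mono //=.
    case: (pt_val x) => e; first by rewrite /F /= e eqxx in Fx.
    by rewrite -e mono // => y ->.
  apply/eqP; rewrite eq_le ge0 andbT -phiG0 mono // => x Ax.
  rewrite -CF => Fx; apply: nF; by exists x.
Qed.

End Det.
Lemma indic_itv (R : realType) (i : interval R) (t : R) : \1_([set` i]) t = (t \in i)%:R :> R.
Proof.
rewrite indicE; case: (boolP (t \in i)) => ti; first by rewrite mem_set.
by rewrite memNset //=; apply/negP.
Qed.

Section Leb.
Context {R : realType}.
Local Open Scope ereal_scope.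
Notation mu := (@lebesgue_measure R).

Lemma int_scaled_indic (D A : set R) (a : R) : measurable D -> measurable A ->
  (0 <= a)%R ->
  \int[mu]_(t in D) (a * \1_A t)%:E = a%:E * mu (A `&` D).
Proof.
move=> mD mA a0.
rewrite (@integralZl_indic _ _ _ mu D mD (fun=> A) a) //; last first.
  by move=> /=; rewrite ltNge a0.
by rewrite integral_indic.
Qed.

Lemma meas_scaled_indic (D A : set R) (a : R) : measurable A ->
  measurable_fun D (fun t => (a * \1_A t)%:E).
Proof.
move=> mA; apply/measurable_EFinP; apply: measurable_funM.
  exact: measurable_cst.
exact: measurable_indic.
Qed.

Lemma scaled_indic_ge0 (A : set R) (a : R) t : (0 <= a)%R -> 0 <= (a * \1_A t)%:E.
Proof. by move=> a0; rewrite lee_fin mulr_ge0. Qed.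

End Leb.

Section TestFun.
Context {R : realType} {E : topologicalType}.
Hypothesis hE : hausdorff_space E.
Variables K L : set E.
Hypothesis cK : compact K.
Hypothesis cL : compact L.
Hypothesis KL : K `<=` L.

Definition f2 (x : E) : R := (\1_K x + \1_L x)%R.

Lemma f2E x : f2 x = (if `[< K x >] then 2 else if `[< L x >] then 1 else 0)%R.
Proof.
rewrite /f2 !indicE; case: asboolP => [Kx|nK].
  by rewrite !mem_set //; apply: KL.
rewrite (memNset nK) add0r; case: asboolP => [Lx|nL]; first by rewrite mem_set.
by rewrite memNset.
Qed.

Lemma f2_USC : USC f2.
Proof.
have cLc : closed L by exact: compact_closed.
have cKc : closed K by exact: compact_closed.
split.
- exists 2%R => x; rewrite f2E; case: asboolP => _; first by rewrite ger0_norm.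
  by case: asboolP => _; rewrite ?normr1 ?normr0 // ler1n.
- by move=> x; rewrite f2E; case: asboolP => _ //; case: asboolP.
- move=> t; have [t0|t0] := leP t 0%R.
    rewrite (_ : [set x | f2 x < t] = set0); first exact: open0.
    apply/seteqP; split => // x /=; rewrite f2E.
    by case: asboolP => _; [|case: asboolP => _] => /= H; lra.
  have [t1|t1] := leP t 1%R.
    rewrite (_ : [set x | f2 x < t] = ~` L); first by rewrite openC.
    apply/seteqP; split => x /=; rewrite f2E.
      case: asboolP => [Kx|_]; first by move=> H; lra.
      by case: asboolP => // _ H; lra.
    by move=> nL; rewrite asboolF => [|/KL //]; rewrite asboolF.
  have [t2|t2] := leP t 2%R.
    rewrite (_ : [set x | f2 x < t] = ~` K); first by rewrite openC.
    apply/seteqP; split => x /=; rewrite f2E.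
      by case: asboolP => // _ H; lra.
    by move=> nK; rewrite asboolF //; case: asboolP => _ /=; lra.
  rewrite (_ : [set x | f2 x < t] = setT); first exact: openT.
  apply/seteqP; split => // x _ /=; rewrite f2E.
  by case: asboolP => _ //; case: asboolP => _ /=; lra.
- rewrite (_ : [set x | f2 x != 0%R] = L).
    by rewrite -(closure_id L).1.
  apply/seteqP; split => x /=; rewrite f2E.
    by case: asboolP => [/KL //|_]; case: asboolP => // _; rewrite eqxx.
  by move=> Lx; case: asboolP => _; [|rewrite asboolT]; rewrite ?pnatr_eq0 ?oner_eq0.
Qed.

Local Open Scope ereal_scope.
Variable phi : set E -> \bar R.
Hypothesis hphi : sup_measure phi.

Let phi0 : phi set0 = 0. Proof. by case: hphi => -[]. Qed.
Let mono A B : A `<=` B -> phi A <= phi B. Proof. by case: hphi => -[_ + _] _; apply. Qed.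
Let ge0 A : 0 <= phi A. Proof. by case: hphi => -[]. Qed.
Let fin A : compact A -> phi A < +oo. Proof. by case: hphi => _ [_ _ + _]; apply. Qed.

Lemma f2_ext : ext_int f2 phi = maxe (phi L) (2%:E * phi K).
Proof.
apply/eqP; rewrite eq_le; apply/andP; split.
  apply: ge_ereal_sup => _ [K' cK' <-].
  set i := ereal_inf _.
  have [[x [K'x nL]]|AL] := pselect (exists x, K' x /\ ~ L x).
    have : i <= 0.
      apply: ereal_inf_lbound; exists x => //; rewrite f2E asboolF; last by move=> /KL.
      by rewrite asboolF.
    move=> /(lee_wpmul2l (ge0 K')); rewrite mule0 => /le_trans; apply.
    by rewrite le_max ge0.
  have K'L : K' `<=` L by move=> y K'y; apply: contra_notP AL => nL; exists y.
  have [[x [K'x nK]]|AK] := pselect (exists x, K' x /\ ~ K x).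
    have : i <= 1.
      apply: ereal_inf_lbound; exists x => //; rewrite f2E asboolF // asboolT //.
      exact: K'L.
    move=> /(lee_wpmul2l (ge0 K')); rewrite mule1 => /le_trans; apply.
    by rewrite le_max mono.
  have K'K : K' `<=` K by move=> y K'y; apply: contra_notP AK => nK; exists y.
  have [[x K'x]|n0] := pselect (exists x, K' x).
    have : i <= 2%:E by apply: ereal_inf_lbound; exists x => //; rewrite f2E asboolT //; exact: K'K.
    move=> /(lee_wpmul2l (ge0 K')) /le_trans; apply.
    rewrite le_max; apply/orP; right; rewrite [leRHS]muleC; apply: lee_wpmul2r => //; exact: mono.
  rewrite (_ : K' = set0); first by rewrite phi0 mul0e le_max ge0.
  by apply/seteqP; split => // y K'y; apply: n0; exists y.
rewrite ge_max; apply/andP; split.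
  apply: (@le_trans _ _ (phi L * ereal_inf [set (f2 x)%:E | x in L])); last first.
    by apply: ereal_sup_ubound; exists L.
  rewrite -[leLHS]mule1; apply: lee_wpmul2l => //.
  apply: le_ereal_inf_tmp => _ [x Lx <-]; rewrite f2E; case: asboolP => _.
    by rewrite lee_fin ler1n.
  by rewrite asboolT.
apply: (@le_trans _ _ (phi K * ereal_inf [set (f2 x)%:E | x in K])); last first.
  by apply: ereal_sup_ubound; exists K.
rewrite muleC; apply: lee_wpmul2l => //.
by apply: le_ereal_inf_tmp => _ [x Kx <-]; rewrite f2E asboolT.
Qed.

Lemma f2_choquet : choquet_int f2 phi = phi L + phi K.
Proof.
have fL : phi L \is a fin_num by rewrite ge0_fin_numE // fin.
have fK : phi K \is a fin_num by rewrite ge0_fin_numE // fin.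
rewrite /choquet_int.
rewrite (@int_null _ _ _ (@lebesgue_measure R) _ [set 0%R] _
  (fun t => (fine (phi L) * \1_(`]0%R, 1%R] : set R) t)%:E +
            (fine (phi K) * \1_(`]1%R, 2%R] : set R) t)%:E)); last 5 first.
- exact: measurable_set1.
- exact: lebesgue_measure_set1.
- by move=> t _; apply: ge0.
- by move=> t _; apply: adde_ge0; apply: scaled_indic_ge0; rewrite fine_ge0.
- move=> t Dt tn0; have t0 : (0 <= t)%R by move: Dt; rewrite /mkset in_itv /= andbT.
  have tp : (0 < t)%R by rewrite lt_neqAle t0 andbT eq_sym; apply/eqP.
  rewrite !indic_itv !in_itv /= tp /=.
  have [t1|t1] := leP t 1%R.
    rewrite (_ : [set x | (t <= f2 x)%R] = L).
      by rewrite /= mulr1 mulr0 adde0 fineK.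
    apply/seteqP; split => x /=; rewrite f2E.
      by case: asboolP => [/KL //|_]; case: asboolP => // _ H; lra.
    by move=> Lx; case: asboolP => _; [|rewrite asboolT //] => /=; lra.
  have [t2|t2] := leP t 2%R.
    rewrite (_ : [set x | (t <= f2 x)%R] = K).
      by rewrite mulr0 mulr1 add0e fineK.
    apply/seteqP; split => x /=; rewrite f2E.
      by case: asboolP => // _; case: asboolP => _ /= H; lra.
    by move=> Kx; rewrite asboolT //= .
  rewrite (_ : [set x | (t <= f2 x)%R] = set0).
    by rewrite !mulr0 adde0 phi0.
  apply/seteqP; split => x //=; rewrite f2E.
  by case: asboolP => _; [|case: asboolP => _] => /= H; lra.
rewrite ge0_integralD //; last 4 first.
- by move=> t _; apply: scaled_indic_ge0; rewrite fine_ge0.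
- exact: meas_scaled_indic.
- by move=> t _; apply: scaled_indic_ge0; rewrite fine_ge0.
- exact: meas_scaled_indic.
rewrite !int_scaled_indic // ?fine_ge0 //.
rewrite !setIidl; last 2 first.
- by move=> t /=; rewrite !in_itv /= => /andP[/ltW /(lt_le_trans ltr01) /ltW ->].
- by move=> t /=; rewrite !in_itv /= => /andP[/ltW ->].
rewrite !lebesgue_measure_itv /= !lte_fin ltr01 (_ : (1 < 2)%R = true); last by lra.
rewrite oppr0 adde0 mule1 (_ : 2 + (-1)%:E = 1).
  by rewrite mule1 !fineK.
by rewrite -EFinD; congr EFin; lra.
Qed.

End TestFun.
Section Fwd.
Context {R : realType} {E : topologicalType}.
Local Open Scope ereal_scope.
Variable f : E -> R.
Hypothesis hf : USC f.
Variable phi : set E -> \bar R.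
Variables (c : R) (F : set E).
Hypothesis c0 : (0 <= c)%R.
Hypothesis hphiF : forall A, phi A = if `[< F `&` A !=set0 >] then c%:E else 0.

Let phi0 : phi set0 = 0.
Proof. by rewrite hphiF asboolF // => -[x [_ []]]. Qed.

Let ext0 : 0 <= ext_int f phi.
Proof.
apply: (@le_trans _ _ (phi set0 * ereal_inf [set (f x)%:E | x in set0])).
  by rewrite phi0 mul0e.
by apply: ereal_sup_ubound; exists set0 => //; exact: compact0.
Qed.

Lemma fwd_eq : ext_int f phi = choquet_int f phi.
Proof.
have [[x0 Fx0]|nF] := pselect (exists x, F x); last first.
  have p0 A : phi A = 0 by rewrite hphiF asboolF // => -[x [Fx _]]; apply: nF; exists x.
  rewrite /choquet_int integral0_eq; last by move=> t _; exact: p0.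
  apply/eqP; rewrite eq_le ext0 andbT; apply: ge_ereal_sup => _ [K _ <-].
  by rewrite p0 mul0e.
case: hf => [[M hM] f0 _ _].
set S := [set f x | x in F].
have hS : has_sup S.
  split; first by exists (f x0), x0.
  exists M => _ [x _ <-]; exact: le_trans (ler_norm _) (hM x).
set s := sup S.
have fs x : F x -> (f x <= s)%R by move=> Fx; apply: sup_upper_bound => //; exists x.
have s0 : (0 <= s)%R by apply: le_trans (f0 x0) (fs x0 Fx0).
have -> : ext_int f phi = (c * s)%:E.
  apply/eqP; rewrite eq_le; apply/andP; split.
    apply: ge_ereal_sup => _ [K cK <-].
    rewrite hphiF; case: asboolP => [[x [Fx Kx]]|_]; last first.
      by rewrite mul0e lee_fin mulr_ge0.
    rewrite EFinM; apply: lee_wpmul2l; first by rewrite lee_fin.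
    apply: (@le_trans _ _ (f x)%:E); first by apply: ereal_inf_lbound; exists x.
    by rewrite lee_fin fs.
  apply/lee_addgt0Pr => e e0.
  have [cz|cp] := eqVneq c 0%R.
    by rewrite cz mul0r; apply: adde_ge0 => //; rewrite lee_fin ltW.
  have cp' : (0 < c)%R by rewrite lt_neqAle eq_sym cp c0.
  have [_ [y Fy <-] Hy] := sup_adherent (divr_gt0 e0 cp') hS.
  apply: (@le_trans _ _ ((c * f y)%:E + e%:E)).
    rewrite -EFinD lee_fin.
    have H1 : (c * (s - e / c) <= c * f y)%R by rewrite ler_wpM2l // ltW.
    have H2 : (c * (e / c) = e)%R by rewrite mulrCA mulfV ?mulr1.
    by move: H1; rewrite mulrBr H2 => H1; lra.
  rewrite leeD2r //.
  apply: (@le_trans _ _ (phi [set y] * ereal_inf [set (f x)%:E | x in [set y]])).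
    rewrite image_set1 ereal_inf1 hphiF asboolT ?EFinM //.
    by exists y.
  by apply: ereal_sup_ubound; exists [set y] => //; exact: compact_set1.
rewrite /choquet_int.
rewrite (@int_null _ _ _ (@lebesgue_measure R) _ [set s] _
  (fun t => (c * \1_(`[0%R, s[ : set R) t)%:E)); last 5 first.
- exact: measurable_set1.
- exact: lebesgue_measure_set1.
- by move=> t _; rewrite hphiF; case: asboolP.
- by move=> t _; apply: scaled_indic_ge0.
- move=> t Dt tns; have t0 : (0 <= t)%R by move: Dt; rewrite /mkset in_itv /= andbT.
  rewrite indic_itv in_itv /= t0 /= hphiF.
  have [ts|ts] := ltP t s.
    rewrite asboolT ?mulr1 //.
    have st : (0 < s - t)%R by rewrite subr_gt0.
    have [_ [y Fy <-] Hy] := sup_adherent st hS.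
    by exists y; split => //=; rewrite /mkset; move: Hy; rewrite opprB addrCA subrr addr0 => /ltW.
  rewrite asboolF ?mulr0 // => -[x [Fx /= tx]].
  have : (s < t)%R by rewrite lt_neqAle ts andbT; apply/eqP => e; apply: tns; rewrite e.
  by move: (fs x Fx) tx; rewrite /mkset => ?? ?; lra.
rewrite int_scaled_indic //.
rewrite setIidl; last by move=> t /=; rewrite !in_itv /= => /andP[->].
rewrite lebesgue_measure_itv /= lte_fin.
have [sp|] := ltP 0%R s; first by rewrite oppr0 adde0 EFinM.
move=> sle; have -> : s = 0%R by apply/eqP; rewrite eq_le sle s0.
by rewrite mulr0 mule0.
Qed.

End Fwd.
Section Prob.
Context {R : realType} {E : topologicalType}.
Context (d : measure_display) (Omega : measurableType d) (P : probability Omega R).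
Variable Y : Omega -> set E -> \bar R.
Hypothesis hY : random_sup_measure Y.
Local Open Scope ereal_scope.

Lemma Y_sm w : sup_measure (Y w).
Proof. by case: hY => + _; apply. Qed.

Lemma Y_meas K : compact K -> measurable_fun setT (fun w => Y w K).
Proof.
move=> cK; apply: (measurability _ (ErealGenInftyO.measurableE R)) => //.
move=> /= _ [_ [r ->] <-].
set B := [set m : set E -> \bar R | SM m /\ m K < r%:E].
have -> : setT `&` (fun w => Y w K) @^-1` `]-oo, r%:E[ = Y @^-1` B.
  apply/seteqP; split => w /=.
    by move=> [_]; rewrite /mkset in_itv /= => H; split => //; case: hY => + _; apply.
  by move=> [_ H]; split => //; rewrite /mkset in_itv /=.
case: hY => _; apply; apply: sub_sigma_algebra.
exists [set [set m : set E -> \bar R | m K < r%:E]]; split.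
  move=> _ ->; exists 1%N, (fun _ => [set m : set E -> \bar R | m K < r%:E]); split.
    move=> i _; left; exists K, r; split => //.
  apply/seteqP; split => m /=; first by move=> H i _.
  by move=> /(_ 0%N); apply.
by rewrite bigcup_set1.
Qed.

End Prob.
Section Prob2.
Context {R : realType} {E : topologicalType}.
Context (d : measure_display) (Omega : measurableType d) (P : probability Omega R).
Variable Y : Omega -> set E -> \bar R.
Hypothesis hY : random_sup_measure Y.
Hypothesis hI : integrable_rsm P Y.
Hypothesis hE : hausdorff_space E.
Hypothesis Hf : forall f : E -> R, USC f ->
      (\int[P]_w ext_int f (Y w) = \int[P]_w choquet_int f (Y w))%E.
Local Open Scope ereal_scope.

Let ge w A : 0 <= Y w A.
Proof. by case: (Y_sm hY w) => -[]. Qed.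
Let monoY w A B : A `<=` B -> Y w A <= Y w B.
Proof. by case: (Y_sm hY w) => -[_ + _] _; apply. Qed.
Let finY w A : compact A -> Y w A \is a fin_num.
Proof. by move=> cA; rewrite ge0_fin_numE //; case: (Y_sm hY w) => _ [_ _ + _]; apply. Qed.

Lemma pair_ae K L : compact K -> compact L -> K `<=` L ->
  {ae P, forall w, Y w K = 0 \/ Y w K = Y w L}.
Proof.
move=> cK cL KL.
have mk := Y_meas hY cK; have ma := Y_meas hY cL.
have H := Hf (f2_USC hE cK cL KL).
have E1 : \int[P]_w ext_int (f2 K L) (Y w) = \int[P]_w maxe (Y w L) (2%:E * Y w K).
  by apply: eq_integral => w _; exact: (f2_ext cK cL KL (Y_sm hY w)).
have E2 : \int[P]_w choquet_int (f2 K L) (Y w) = \int[P]_w (Y w L + Y w K).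
  by apply: eq_integral => w _; exact: (f2_choquet cK cL KL (Y_sm hY w)).
rewrite E1 E2 in H.
set m := fun w => maxe (Y w L) (2%:E * Y w K).
set dd := fun w => (Y w L + Y w K) - m w.
have hm : measurable_fun setT m by apply: measurable_maxe => //; exact: measurable_funeM.
have hdd : measurable_fun setT dd by apply: emeasurable_funB => //; exact: emeasurable_funD.
have finm w : m w \is a fin_num.
  by rewrite /m; case: leP => _; rewrite ?fin_numM ?finY.
have m0 w : 0 <= m w by rewrite /m le_max ge.
have dd0 w : 0 <= dd w.
  rewrite /dd sube_ge0 ?finm // ge_max leeDl //=.
  have := monoY w KL; rewrite -(fineK (finY w cK)) -(fineK (finY w cL)).
  by rewrite -EFinM -EFinD !lee_fin => h; lra.
have intak : \int[P]_w (Y w L + Y w K) = \int[P]_w m w + \int[P]_w dd w.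
  rewrite -ge0_integralD //.
  by apply: eq_integral => w _; rewrite /dd [RHS]addeC subeK.
have finI : \int[P]_w m w \is a fin_num.
  rewrite ge0_fin_numE; last by apply: integral_ge0 => w _; exact: m0.
  rewrite H ge0_integralD //.
  by apply: lte_add_pinfty; apply: hI.
have Idd : \int[P]_w dd w = 0.
  have := congr1 (fun z => z - \int[P]_w m w) (etrans H intak) => /=.
  by rewrite subee // [X in _ = X - _]addeC addeK.
have : ae_eq P setT dd (cst 0).
  apply/(ae_eq_integral_abs P measurableT hdd).
  by rewrite -Idd; apply: eq_integral => w _; rewrite gee0_abs.
apply: filterS => w /(_ I) /= ddw.
have fK := finY w cK; have fL := finY w cL.
move: ddw (monoY w KL) (ge w K); rewrite /dd /m -(fineK fK) -(fineK fL).
set a := fine (Y w L); set k := fine (Y w K).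
rewrite (_ : 2 * k%:E = (2 * k)%:E) // -EFin_max -EFinD !lee_fin => e0 ka k0.
have e1 : (a + k - Num.max a (2 * k) = 0)%R by apply: EFin_inj; exact: e0.
have [h|h] := leP a (2 * k)%R.
  by rewrite max_r // in e1; right; rewrite (_ : k = a) //; lra.
by rewrite max_l ?ltW // in e1; left; rewrite (_ : k = 0%R) //; lra.
Qed.

End Prob2.
Lemma exists_base (E : topologicalType) : locally_compact [set: E] -> @second_countable E ->
  exists b : nat -> set E, [/\ (forall n, open (b n)), (forall n, compact (closure (b n))) &
    (forall x (U : set E), open U -> U x -> exists n, b n x /\ b n `<=` U)].
Proof.
move=> lc [B cB [Bo Bb]].
have /countable_injP [g ginj] := cB.
pose Q n := [set U : set E | B U /\ g U = n /\ compact (closure U)].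
pose b n : set E := match pselect (exists U, Q n U) with
  | left ex => proj1_sig (cid ex) | right _ => set0 end.
have bQ n : (exists U, Q n U) -> Q n (b n).
  by rewrite /b; case: pselect => // ex _; exact: (proj2_sig (cid ex)).
have bC n : Q n (b n) \/ b n = set0.
  by rewrite /b; case: pselect => [ex|_]; [left; exact: (proj2_sig (cid ex)) | right].
exists b; split.
- by move=> n; case: (bC n) => [[/Bo]|->] //; exact: open0.
- by move=> n; case: (bC n) => [[_ []]|->] //; rewrite closure0; exact: compact0.
move=> x U oU Ux.
have [V Vx [cV clV]] := lc x I.
have nV : nbhs x V by move: Vx; rewrite /within /=; apply: filterS => y; apply.
have nUV : nbhs x (U `&` V) by apply: filterI => //; exact: open_nbhs_nbhs.
have [W [BW Wx] WUV] := Bb x _ nUV.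
have cW : compact (closure W).
  apply: (@subclosed_compact _ _ V) => //; first exact: closed_closure.
  by rewrite (closure_id V).1 //; apply: closureS => y /WUV [].
have QW : Q (g W) W by [].
have [Bb' [gb _]] := bQ (g W) (ex_intro _ W QW).
have EW : b (g W) = W by apply: ginj => //; rewrite inE.
by exists (g W); rewrite EW; split => // y /WUV [].
Qed.
Lemma ext_ge0 {R : realType} {E : topologicalType} (f : E -> R) (phi : set E -> \bar R) :
  sup_measure phi -> (0 <= ext_int f phi)%E.
Proof.
move=> hphi; have phi0 : phi set0 = 0%E by case: hphi => -[].
apply: (@le_trans _ _ (phi set0 * ereal_inf [set (f x)%:E | x in set0])%E).
  by rewrite phi0 mul0e.
by apply: ereal_sup_ubound; exists set0 => //; exact: compact0.
Qed.

Lemma choquet_ge0 {R : realType} {E : topologicalType} (f : E -> R) (phi : set E -> \bar R) :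
  sup_measure phi -> (0 <= choquet_int f phi)%E.
Proof. by move=> hphi; apply: integral_ge0 => t _; case: hphi => -[]. Qed.

Unset Implicit Arguments.
Set Strict Implicit.
Theorem mainTheorem10 (R : realType) (E : topologicalType)
  (d : measure_display) (Omega : measurableType d) (P : probability Omega R)
  (Y : Omega -> set E -> \bar R) :
  hausdorff_space E -> locally_compact [set: E] -> @second_countable E ->
  random_sup_measure Y -> integrable_rsm P Y ->
  ({ae P, forall w, scaled_indicator (Y w)} <->
   (forall f : E -> R, USC f ->
      (\int[P]_w ext_int f (Y w) = \int[P]_w choquet_int f (Y w))%E)).
Proof.
move=> hE lc sc hY hI; split.
  move=> [N [mN PN sub]] f Uf.
  apply: (@int_null _ _ _ P setT N) => //.
  - by move=> w _; apply: ext_ge0; exact: Y_sm.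
  - by move=> w _; apply: choquet_ge0; exact: Y_sm.
  move=> w _ Nw.
  have : scaled_indicator (Y w) by apply: contra_notP Nw => H; exact: sub.
  by rewrite /scaled_indicator => -[c [F [c0 _ hF]]]; exact: (fwd_eq Uf c0 hF).
move=> Hf.
have [b [b_open b_cpt b_base]] := exists_base lc sc.
have Hn n : {ae P, forall w,
    match (unpickle n : option (seq (seq nat) * seq (seq nat))) with
    | Some (s, t) => Y w (Kset b s) = 0%E \/ Y w (Kset b s) = Y w (Kset b (s ++ t))
    | None => True end}.
  case: (unpickle n) => [[s t]|]; last exact: aeW.
  apply: (pair_ae hY hI hE Hf).
  - exact: Kset_cpt.
  - exact: Kset_cpt.
  - by rewrite Kset_cat; exact: subsetUl.
have := ae_foralln Hn; apply: filterS => w Hw.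
apply: (det_indicator b_open b_cpt b_base hE (Y_sm hY w)) => s t.
by have := Hw (pickle (s, t)); rewrite pickleK.
Qed.
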